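(* Let $G$ be a finite simple graph, $1\le k\le\operatorname{mat}(G)$, and let $M$ be a $k$-admissable matching of $G$ that is a perfect matching of $G$. Let $M=M_1\cup\dots\cup M_r$ be a $k$-admissable partition of $M$ for $G$. If $x$ is a vertex of some edge of $M_i$ and $y$ is a vertex of some edge of $M_j$ with $i\neq j$, then $x$ and $y$ lie in different connected components of $G$.
   Context: $\operatorname{mat}(G)$ is the matching number; a perfect matching covers every vertex. Two edges form a gap if they are disjoint and no edge of $G$ joins a vertex of one to a vertex of the other. A sequence $(a_1,\dots,a_n)$ of integers is $k$-admissable if $a_i\ge1$ and $\sum a_i\le n+k-1$. A $k$-admissable partition of a matching $M$ for $G$ is a decomposition $M=M_1\cup\dots\cup M_r$ into nonempty pairwise disjoint subsets such that edges from different $M_i$'s always form a gap in $G$, $(|M_1|,\dots,|M_r|)$ is $k$-admissable, and the induced subgraph of $G$ on $\bigcup_{e\in M_i}e$ is a forest for each $i$. $M$ is $k$-admissable if it has such a partition. *)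

(* Defs.v *)
(* A finite simple graph is a symmetric irreflexive relation
   e on a finType T; an edge is a 2-element vertex set {u,v} with e u v. *)
From mathcomp Require Import all_boot.
Set Implicit Arguments. Unset Strict Implicit. Unset Printing Implicit Defensive.

Section Graphs.
Variable T : finType.
Variable e : rel T.

Definition simple_graph : Prop := symmetric e /\ irreflexive e.

Definition is_edge (f : {set T}) : bool :=
  [exists u, exists v, e u v && (f == [set u; v])].

Definition matching (M : {set {set T}}) : bool :=
  [forall f in M, is_edge f] &&
  [forall f in M, forall g in M, (f != g) ==> [disjoint f & g]].

Definition mat : nat := \max_(M : {set {set T}} | matching M) #|M|.

Definition perfect_matching (M : {set {set T}}) : bool :=
  matching M && [forall x : T, [exists f in M, x \in f]].

Definition gap (f g : {set T}) : bool :=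
  [disjoint f & g] && [forall u in f, forall v in g, ~~ e u v].

Definition vertices (N : {set {set T}}) : {set T} := \bigcup_(f in N) f.

(* the induced subgraph of G on S is a forest: it contains no cycle, i.e. no
   duplicate-free closed walk of length >= 3 with all vertices in S *)
Definition induced_forest (S : {set T}) : Prop :=
  forall c : seq T, (3 <= size c)%N -> uniq c -> all (fun v => v \in S) c ->
    ~~ cycle e c.
End Graphs.

Definition admissable_seq (k : nat) (s : seq nat) : bool :=
  all (fun a => 0 < a)%N s && (sumn s <= size s + k - 1)%N.

Definition admissable_partition (T : finType) (e : rel T) (k : nat)
  (M : {set {set T}}) (r : nat) (P : 'I_r -> {set {set T}}) : Prop :=
  (forall i, P i != set0) /\
  [/\ (forall i j, i != j -> [disjoint P i & P j]),
      \bigcup_(i < r) P i = M,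
      (forall i j f g, i != j -> f \in P i -> g \in P j -> gap e f g),
      admissable_seq k [seq #|P i| | i <- enum 'I_r]
    & (forall i, induced_forest e (vertices (P i)))].

Definition admissable_matching (T : finType) (e : rel T) (k : nat)
  (M : {set {set T}}) : Prop :=
  exists r (P : 'I_r -> {set {set T}}), admissable_partition e k M P.

(* Main.v *)
Require Import Defs.
From mathcomp Require Import all_boot.

Theorem lemma5p8 (T : finType) (e : rel T) (k : nat) (M : {set {set T}})
  (r : nat) (P : 'I_r -> {set {set T}}) :
  simple_graph e ->
  (1 <= k)%N -> (k <= mat e)%N ->
  admissable_matching e k M ->
  perfect_matching e M ->
  admissable_partition e k M P ->
  forall (i j : 'I_r) (f g : {set T}) (x y : T),
    i != j -> f \in P i -> x \in f -> g \in P j -> y \in g ->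
    ~~ connect e x y.
Proof.
move=> _ _ _ _ /andP[_ /forallP cov] [_ [_ UM Gap _ _]] i j f g x y ij fP xf gP yg.
have step : forall u v f', f' \in P i -> u \in f' -> e u v ->
    exists2 g', g' \in P i & v \in g'.
  move=> u v f' f'P uf' euv.
  have /existsP[g' /andP[g'M vg']] := cov v.
  move: g'M; rewrite -UM => /bigcupP[b _ g'P].
  case: (eqVneq b i) => [<-|bi]; first by exists g'.
  have /andP[_ /forallP H] := Gap i b f' g' ltac:(by rewrite eq_sym) f'P g'P.
  by have := H u; rewrite uf' /= => /forallP /(_ v); rewrite vg' /= euv.
apply/negP => /connectP[p pth yeq]; rewrite yeq in yg; clear yeq.
elim: p x f fP xf pth yg => [|v p IH] x f fP xf /=.
  move=> _ yg; have /andP[dj _] := Gap i j f g ij fP gP.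
  by move: dj; rewrite disjoint_subset => /subsetP /(_ x xf); rewrite inE yg.
move=> /andP[exv pth].
have [g' g'P vg'] := step x v f fP xf exv.
exact: (IH v g' g'P vg' pth).
Qed.
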